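(* Let $A$ and $N$ be real $m\times n$ matrices, let $\tilde A=A+N$, and assume $\|N\|_2\le\eta$ for some $\eta\ge0$. Let $\tilde A_1,\ldots,\tilde A_n$ be the columns of $\tilde A$, let $\tilde\rho=\mathrm{rank}(\tilde A)\ge 1$, let $\mu\ge 0$, and let $\pi:[n]\to[n]$ be a permutation such that $\tilde A_{\pi(1)},\ldots,\tilde A_{\pi(\tilde\rho)}$ are linearly independent. For $k\in\{0,\ldots,\tilde\rho\}$ let $W_k$ be the orthogonal projection onto $\mathrm{span}\{\tilde A_{\pi(1)},\ldots,\tilde A_{\pi(k)}\}$ ($W_0=0$), $W_k^\perp=I-W_k$, and $\tilde Q_k=W_{k-1}^\perp(\tilde A_{\pi(k)})/\|W_{k-1}^\perp(\tilde A_{\pi(k)})\|$ for $k\in[\tilde\rho]$. Let $s\in[\tilde\rho]$ be such that $\|W_s^\perp(\tilde A_i)\|\le\mu$ for all $i\in[n]$, and define $\tilde F_s:\mathbb R^m\to\mathbb R^s$ by $\tilde F_s(v)=(\tilde Q_{[s]})^*v$, where $\tilde Q_{[s]}$ has columns $\tilde Q_1,\ldots,\tilde Q_s$ (so $\tilde F_s$ is a $2\mu$-distortion of the columns of $\tilde A$). Then $\tilde F_s$ is a $2(\mu+\eta)$-distortion of the columns $A_1,\ldots,A_n$ of $A$, i.e. $$\sup_{i,j\in[n]}\Big|\,\|A_i-A_j\|-\|\tilde F_s(A_i)-\tilde F_s(A_j)\|\,\Big|\le 2(\mu+\eta).$$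
   Context: Vector norms are Euclidean; $\|N\|_2$ is the operator norm of $N$ induced by the Euclidean norm; $[k]=\{1,\ldots,k\}$; $^*$ denotes transpose. A map $F$ on a set $\mathcal A$ is a $\mu$-distortion of $\mathcal A$ if $\sup_{x,y\in\mathcal A}|\,\|x-y\|-\|F(x)-F(y)\|\,|\le\mu$. *)

(* Defs.v *)
(* Real numbers: any real closed field R : rcfType
   (the statement is purely algebraic; this includes the reals). *)
From HB Require Import structures.
From mathcomp Require Import all_boot all_order all_algebra all_fingroup.
Set Implicit Arguments. Unset Strict Implicit. Unset Printing Implicit Defensive.
Import Order.TTheory GRing.Theory Num.Theory.
Local Open Scope ring_scope.

Section Defs.
Variable R : rcfType.

Definition dotv (m : nat) (u v : 'cV[R]_m) : R := (u^T *m v) 0 0.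
Definition enorm (m : nat) (v : 'cV[R]_m) : R := Num.sqrt (dotv v v).

(* ||N||_2 <= eta, with ||N||_2 = sup_{v <> 0} ||N v|| / ||v|| the induced
   operator norm; unfolded: ||N v|| <= eta ||v|| for every v. *)
Definition opnorm_le (m n : nat) (N : 'M[R]_(m, n)) (eta : R) : Prop :=
  forall v : 'cV[R]_n, enorm (N *m v) <= eta * enorm v.

(* The columns of At in the order given by the permutation pi:
   (pcols At pi)`_k = At_{pi(k+1)} in the paper's 1-based notation. *)
Definition pcols (m n : nat) (At : 'M[R]_(m, n)) (pi : 'S_n) : seq 'cV[R]_m :=
  [seq col (pi j) At | j <- enum 'I_n].

Definition pspan (m n : nat) (At : 'M[R]_(m, n)) (pi : 'S_n) (k : nat)
  : {vspace 'cV[R]_m} := <<take k (pcols At pi)>>%VS.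

Definition is_orth_proj (m : nat) (P : 'M[R]_m) (U : {vspace 'cV[R]_m}) : Prop :=
  forall v : 'cV[R]_m,
    (P *m v \in U) /\ (forall u : 'cV[R]_m, u \in U -> dotv u (v - P *m v) = 0).

(* Q_k (0-based index k, i.e. the paper's Q_{k+1}):
   W_k^perp (At_{pi(k+1)}) / || W_k^perp (At_{pi(k+1)}) || *)
Definition Qvec (m n : nat) (At : 'M[R]_(m, n)) (pi : 'S_n) (W : nat -> 'M[R]_m)
  (k : nat) : 'cV[R]_m :=
  let w := (1%:M - W k) *m nth 0 (pcols At pi) k in (enorm w)^-1 *: w.

Definition Qmat (m n : nat) (At : 'M[R]_(m, n)) (pi : 'S_n) (W : nat -> 'M[R]_m)
  (s : nat) : 'M[R]_(m, s) :=
  \matrix_(i < m, j < s) Qvec At pi W j i 0.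

Definition Fs (m n : nat) (At : 'M[R]_(m, n)) (pi : 'S_n) (W : nat -> 'M[R]_m)
  (s : nat) (v : 'cV[R]_m) : 'cV[R]_s := (Qmat At pi W s)^T *m v.

End Defs.

(* Main.v *)
Require Import Defs.
Set Warnings "-all".
From HB Require Import structures.
From mathcomp Require Import all_boot all_order all_algebra all_fingroup.
From mathcomp Require Import ring lra.
Import Order.TTheory GRing.Theory Num.Theory.
Set Implicit Arguments. Unset Strict Implicit.
Local Open Scope ring_scope.

Section Norms.
Variable R : rcfType.
Variable m : nat.
Implicit Types u v w : 'cV[R]_m.

Lemma dotvE u v : dotv u v = \sum_k u k 0 * v k 0.
Proof. by rewrite /dotv mxE; apply: eq_bigr => k _; rewrite mxE. Qed.

Lemma dotvC u v : dotv u v = dotv v u.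
Proof. rewrite !dotvE; apply: eq_bigr => k _; exact: mulrC. Qed.

Lemma dotvDr u v w : dotv u (v + w) = dotv u v + dotv u w.
Proof. by rewrite !dotvE -big_split; apply: eq_bigr => k _; rewrite mxE mulrDr. Qed.

Lemma dotvZr a u v : dotv u (a *: v) = a * dotv u v.
Proof. by rewrite !dotvE mulr_sumr; apply: eq_bigr => k _; rewrite mxE mulrCA. Qed.

Lemma dotvNr u v : dotv u (- v) = - dotv u v.
Proof. by rewrite -scaleN1r dotvZr mulN1r. Qed.

Lemma dotvBr u v w : dotv u (v - w) = dotv u v - dotv u w.
Proof. by rewrite dotvDr dotvNr. Qed.

Lemma dotvDl u v w : dotv (v + w) u = dotv v u + dotv w u.
Proof. by rewrite dotvC dotvDr !(dotvC u). Qed.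

Lemma dotvZl a u v : dotv (a *: v) u = a * dotv v u.
Proof. by rewrite dotvC dotvZr dotvC. Qed.

Lemma dotvBl u v w : dotv (v - w) u = dotv v u - dotv w u.
Proof. by rewrite dotvC dotvBr !(dotvC u). Qed.

Lemma dotv0r u : dotv u 0 = 0.
Proof. by rewrite -(scale0r 0) dotvZr mul0r. Qed.

Lemma dotv_ge0 v : 0 <= dotv v v.
Proof. by rewrite dotvE; apply: sumr_ge0 => k _; rewrite -expr2 sqr_ge0. Qed.

Lemma dotv_eq0 v : dotv v v = 0 -> v = 0.
Proof.
rewrite dotvE => /eqP; rewrite psumr_eq0 => [/allP H|k _]; last by rewrite -expr2 sqr_ge0.
apply/matrixP => i j; rewrite ord1 mxE.
have := H i (mem_index_enum i); rewrite -expr2 sqrf_eq0 => /eqP ->; by [].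
Qed.

Lemma enorm_ge0 v : 0 <= enorm v.
Proof. exact: sqrtr_ge0. Qed.

Lemma enorm_sq v : enorm v ^+ 2 = dotv v v.
Proof. by rewrite sqr_sqrtr // dotv_ge0. Qed.

Lemma cauchy_schwarz u v : dotv u v <= enorm u * enorm v.
Proof.
have Hu := enorm_sq u; have Hv := enorm_sq v.
have Hu0 := enorm_ge0 u; have Hv0 := enorm_ge0 v.
have key : dotv u v ^+ 2 <= dotv u u * dotv v v.
  have [u0|u0] := eqVneq (dotv u u) 0.
    by rewrite (dotv_eq0 u0) dotvC !dotv0r expr0n mul0r.
  have up : 0 < dotv u u by rewrite lt_def u0 dotv_ge0.
  set t := dotv u v / dotv u u.
  have H2 : dotv (v - t *: u) (v - t *: u) = (dotv u u * dotv v v - dotv u v ^+ 2) / dotv u u.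
    rewrite dotvBl !dotvBr !dotvZl !dotvZr (dotvC v u) /t; field; exact: u0.
  have : 0 <= dotv u u * dotv v v - dotv u v ^+ 2.
    by move: (dotv_ge0 (v - t *: u)); rewrite H2 pmulr_lge0 // invr_gt0.
  by rewrite subr_ge0.
rewrite -Hu -Hv in key.
have: `|dotv u v| <= enorm u * enorm v.
  rewrite -ler_sqr ?nnegrE ?mulr_ge0 //; first by rewrite real_normK ?num_real // exprMn.
by move/(le_trans (ler_norm _)).
Qed.

Lemma enorm_triangle u v : enorm (u + v) <= enorm u + enorm v.
Proof.
have H1 := enorm_sq (u + v); have Hu := enorm_sq u; have Hv := enorm_sq v.
have := cauchy_schwarz u v.
rewrite dotvDl !dotvDr (dotvC v u) in H1.
have h0 := enorm_ge0 (u + v); have hu := enorm_ge0 u; have hv := enorm_ge0 v.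
move=> cs; rewrite -ler_sqr ?nnegrE ?addr_ge0 //; nra.
Qed.

Lemma enormN v : enorm (- v) = enorm v.
Proof. by rewrite /enorm dotvNr -(dotvC v) dotvNr opprK. Qed.

Lemma enormB_le u v : enorm (u - v) <= enorm u + enorm v.
Proof. by rewrite -(enormN v) enorm_triangle. Qed.

Lemma pythag u v : dotv u v = 0 -> enorm (u + v) ^+ 2 = enorm u ^+ 2 + enorm v ^+ 2.
Proof. by move=> h; rewrite !enorm_sq dotvDl !dotvDr h (dotvC v u) h !addr0 add0r. Qed.

End Norms.
Section Main.
Variable R : rcfType.
Variables m n : nat.
Variable At : 'M[R]_(m, n).
Variable pi : 'S_n.
Variable W : nat -> 'M[R]_m.

Local Notation l := (pcols At pi).
Local Notation v k := (nth 0 (pcols At pi) k).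

Lemma size_l : size l = n.
Proof. by rewrite /pcols size_map size_enum_ord. Qed.

Lemma pspan_mono k1 k2 : (k1 <= k2)%N -> (pspan At pi k1 <= pspan At pi k2)%VS.
Proof.
move=> h; apply: sub_span => x; rewrite -(take_takel l h); exact: mem_take.
Qed.

Lemma v_in k : (k < size l)%N -> v k \in pspan At pi k.+1.
Proof.
by move=> h; rewrite /pspan (take_nth 0 h); apply: memv_span; rewrite mem_rcons mem_head.
Qed.

Lemma oneBmul (P : 'M[R]_m) (x : 'cV[R]_m) : (1%:M - P) *m x = x - P *m x.
Proof. by rewrite mulmxBl mul1mx. Qed.

Lemma w_neq0 rho k : free (take rho l) -> (k < rho)%N -> (rho <= size l)%N ->
  is_orth_proj (W k) (pspan At pi k) -> (1%:M - W k) *m v k != 0.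
Proof.
move=> fr kr rl hp; rewrite oneBmul subr_eq0; apply/negP => /eqP e.
have kl : (k < size l)%N by apply: leq_trans rl.
have : free (take k.+1 l).
  rewrite -(cat_take_drop k.+1 (take rho l)) in fr.
  by move: (catl_free fr); rewrite take_takel.
have pe : perm_eq (rcons (take k l) (v k)) (v k :: take k l) by rewrite perm_rcons perm_refl.
rewrite (take_nth 0 kl) (perm_free pe) free_cons => /andP [/negP H _].
by apply: H; rewrite e; case: (hp (v k)).
Qed.

Lemma Q_in s (HW : forall k, (k <= s)%N -> is_orth_proj (W k) (pspan At pi k)) k :
  (k < s)%N -> (s <= size l)%N -> Qvec At pi W k \in pspan At pi s.
Proof.
move=> ks sl; have kl : (k < size l)%N by apply: leq_trans sl.
rewrite /Qvec /=; apply: memvZ; rewrite oneBmul; apply: memvB.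
  exact: (subvP (pspan_mono ks) _ (v_in kl)).
exact: (subvP (pspan_mono (ltnW ks)) _ (HW k (ltnW ks) (v k)).1).
Qed.

Lemma Q_orth s (HW : forall k, (k <= s)%N -> is_orth_proj (W k) (pspan At pi k)) j k :
  (s <= size l)%N -> (j < k)%N -> (k < s)%N -> dotv (Qvec At pi W j) (Qvec At pi W k) = 0.
Proof.
move=> sl jk ks.
have kl : (k <= size l)%N by apply: leq_trans (ltnW ks) sl.
have HWk : forall i, (i <= k)%N -> is_orth_proj (W i) (pspan At pi i).
  by move=> i ik; apply: HW; apply: leq_trans ik (ltnW ks).
have Hj := Q_in HWk jk kl.
rewrite {2}/Qvec /= dotvZr oneBmul ((HW k (ltnW ks) (v k)).2 _ Hj) mulr0 //.
Qed.

Lemma Q_norm rho s (HW : forall k, (k <= s)%N -> is_orth_proj (W k) (pspan At pi k)) k :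
  free (take rho l) -> (s <= rho)%N -> (rho <= size l)%N -> (k < s)%N ->
  dotv (Qvec At pi W k) (Qvec At pi W k) = 1.
Proof.
move=> fr sr rl ks.
have := w_neq0 fr (leq_trans ks sr) rl (HW k (ltnW ks)).
rewrite /Qvec /=; set w := (1%:M - W k) *m v k => wn0.
rewrite dotvZl dotvZr -enorm_sq.
have : enorm w != 0.
  apply/negP => /eqP e; move/negP: wn0; apply; apply/eqP; apply: dotv_eq0.
  by rewrite -enorm_sq e expr0n.
move=> ne; field; exact: ne.
Qed.

Lemma Q_dot rho s (HW : forall k, (k <= s)%N -> is_orth_proj (W k) (pspan At pi k)) j k :
  free (take rho l) -> (s <= rho)%N -> (rho <= size l)%N -> (j < s)%N -> (k < s)%N ->
  dotv (Qvec At pi W j) (Qvec At pi W k) = (j == k)%:R.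
Proof.
move=> fr sr rl js ks; have sl := leq_trans sr rl.
have [jk|kj|->] := ltngtP j k.
- by rewrite (Q_orth HW sl jk ks).
- by rewrite dotvC (Q_orth HW sl kj js).
- by rewrite (Q_norm HW fr sr rl ks).
Qed.

Lemma QtQ rho s (HW : forall k, (k <= s)%N -> is_orth_proj (W k) (pspan At pi k)) :
  free (take rho l) -> (s <= rho)%N -> (rho <= size l)%N ->
  (Qmat At pi W s)^T *m Qmat At pi W s = 1%:M.
Proof.
move=> fr sr rl; apply/matrixP => j k; rewrite !mxE.
rewrite -(Q_dot HW fr sr rl (ltn_ord j) (ltn_ord k)) dotvE.
by apply: eq_bigr => i _; rewrite !mxE.
Qed.

Lemma col_Q s (k : 'I_s) : col k (Qmat At pi W s) = Qvec At pi W k.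
Proof. by apply/matrixP => i j; rewrite !mxE ord1. Qed.

Lemma Qt_perp s (HW : forall k, (k <= s)%N -> is_orth_proj (W k) (pspan At pi k))
  (x : 'cV[R]_m) : (s <= size l)%N ->
  (Qmat At pi W s)^T *m ((1%:M - W s) *m x) = 0.
Proof.
move=> sl; apply/matrixP => j k; rewrite ord1 [RHS]mxE oneBmul.
rewrite -((HW s (leqnn s) x).2 _ (Q_in HW (ltn_ord j) sl)) dotvE mxE.
by apply: eq_bigr => i _; rewrite !mxE.
Qed.

Lemma QQt_id rho s (HW : forall k, (k <= s)%N -> is_orth_proj (W k) (pspan At pi k))
  (u : 'cV[R]_m) :
  free (take rho l) -> (s <= rho)%N -> (rho <= size l)%N ->
  u \in pspan At pi s ->
  Qmat At pi W s *m ((Qmat At pi W s)^T *m u) = u.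
Proof.
move=> fr sr rl us.
set Q := Qmat At pi W s.
have HQ : Q^T *m Q = 1%:M by exact: QtQ HW fr sr rl.
set M : 'M[R]_m := 1%:M - Q *m Q^T.
suff: (pspan At pi s <= lker (linfun (mulmx M)))%VS.
  move/subvP/(_ u us); rewrite memv_ker lfunE /= /M mulmxBl mul1mx subr_eq0 mulmxA.
  by move/eqP => e; rewrite {2}e.
have MQ : forall k : 'I_s, M *m Qvec At pi W k = 0.
  move=> k; rewrite -col_Q colE /M mulmxBl mul1mx -!mulmxA (mulmxA Q^T) HQ mul1mx.
  by rewrite subrr.
have : (s <= s)%N by [].
elim: {-2}s => [|k IH] ks.
  by rewrite /pspan take0 span_nil sub0v.
have kl : (k < size l)%N by apply: leq_trans ks (leq_trans sr rl).
apply/span_subvP => x; rewrite (take_nth 0 kl) mem_rcons in_cons => /orP [/eqP ->|xin].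
  rewrite memv_ker lfunE /=.
  have := w_neq0 fr (leq_trans ks sr) rl (HW k (ltnW ks)).
  set w := (1%:M - W k) *m v k => wn0.
  have ne : enorm w != 0.
    apply/negP => /eqP e; move/negP: wn0; apply; apply/eqP; apply: dotv_eq0.
    by rewrite -enorm_sq e expr0n.
  have -> : v k = W k *m v k + enorm w *: Qvec At pi W (Ordinal ks).
    by rewrite /Qvec /= scalerA mulfV // scale1r /w oneBmul addrC subrK.
  rewrite mulmxDr -scalemxAr MQ scaler0 addr0.
  apply/eqP; move/subvP: (IH (ltnW ks)) => /(_ _ (HW k (ltnW ks) (v k)).1).
  by rewrite memv_ker lfunE /= => /eqP.
apply: (subvP (IH (ltnW ks))); exact: memv_span.
Qed.

End Main.
Lemma proj_pythag (R : rcfType) m (P : 'M[R]_m) U (x : 'cV[R]_m) : is_orth_proj P U ->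
  enorm x ^+ 2 = enorm (P *m x) ^+ 2 + enorm ((1%:M - P) *m x) ^+ 2.
Proof.
move=> HP; rewrite -pythag; last by rewrite oneBmul; exact: (HP x).2 _ (HP x).1.
by rewrite oneBmul addrC subrK.
Qed.

Lemma proj_le (R : rcfType) m (P : 'M[R]_m) U (x : 'cV[R]_m) : is_orth_proj P U ->
  enorm ((1%:M - P) *m x) <= enorm x.
Proof.
move=> HP; rewrite -ler_sqr ?nnegrE ?enorm_ge0 // (proj_pythag x HP) lerDr.
exact: sqr_ge0.
Qed.

Lemma enormQ (R : rcfType) m s (Q : 'M[R]_(m, s)) z : Q^T *m Q = 1%:M -> enorm (Q *m z) = enorm z.
Proof. by move=> HQ; rewrite /enorm /dotv trmx_mul -mulmxA (mulmxA Q^T) HQ mul1mx. Qed.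

Lemma enorm_delta (R : rcfType) n (i : 'I_n) : enorm (delta_mx i 0 : 'cV[R]_n) = 1.
Proof. by rewrite /enorm /dotv trmx_delta mul_delta_mx mxE !eqxx sqrtr1. Qed.

Unset Implicit Arguments.

Theorem proposition2 (R : rcfType) (m n : nat) (A N : 'M[R]_(m, n))
  (eta mu : R) (pi : 'S_n) (W : nat -> 'M[R]_m) (s : nat) :
  0 <= eta ->
  opnorm_le N eta ->
  let At := A + N in
  let rho := \rank At in
  (1 <= rho)%N ->
  0 <= mu ->
  free (take rho (pcols At pi)) ->
  (forall k : nat, (k <= rho)%N -> is_orth_proj (W k) (pspan At pi k)) ->
  (1 <= s <= rho)%N ->
  (forall i : 'I_n, enorm ((1%:M - W s) *m col i At) <= mu) ->
  forall i j : 'I_n,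
    `| enorm (col i A - col j A)
       - enorm (Fs At pi W s (col i A) - Fs At pi W s (col j A)) |
    <= 2 * (mu + eta).
Proof.
move=> eta0 HN At rho rho1 mu0 fr HW /andP [s1 sr] Hmu i j.
have rl : (rho <= size (pcols At pi))%N by rewrite size_l; exact: rank_leq_col.
have HWs : forall k, (k <= s)%N -> is_orth_proj (W k) (pspan At pi k).
  by move=> k h; apply: HW; apply: leq_trans h sr.
have sl : (s <= size (pcols At pi))%N by apply: leq_trans sr rl.
have HP := HWs s (leqnn s).
rewrite /Fs -mulmxBr.
set Q := Qmat At pi W s.
set x := col i A - col j A.
have HQ : Q^T *m Q = 1%:M by exact: QtQ HWs fr sr rl.
have e1 : Q^T *m x = Q^T *m (W s *m x).
  have ex : x = W s *m x + (1%:M - W s) *m x by rewrite oneBmul addrC subrK.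
  by rewrite {1}ex mulmxDr Qt_perp // addr0.
have e2 : W s *m x = Q *m (Q^T *m (W s *m x)).
  by rewrite (QQt_id HWs fr sr rl (HP x).1).
have e3 : enorm (Q^T *m x) = enorm (W s *m x) by rewrite e1 {2}e2 (enormQ _ HQ).
rewrite e3.
have py := proj_pythag x HP.
have ex : x = (col i At - col j At) - (col i N - col j N).
  by apply/matrixP => r c; rewrite !mxE; ring.
have bound : enorm ((1%:M - W s) *m x) <= 2 * (mu + eta).
  rewrite ex mulmxBr mulmxBr.
  apply: le_trans (enormB_le _ _) _.
  have h1 := enormB_le ((1%:M - W s) *m col i At) ((1%:M - W s) *m col j At).
  have h2 := Hmu i; have h3 := Hmu j.
  have h4 := proj_le (col i N - col j N) HP.
  have h5 := enormB_le (col i N) (col j N).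
  have h6 := HN (delta_mx i 0); have h7 := HN (delta_mx j 0).
  rewrite enorm_delta -colE in h6; rewrite enorm_delta -colE in h7.
  lra.
have a0 := enorm_ge0 x; have b0 := enorm_ge0 (W s *m x).
have c0 := enorm_ge0 ((1%:M - W s) *m x).
have ba : enorm (W s *m x) <= enorm x by nra.
have ab : enorm x - enorm (W s *m x) <= enorm ((1%:M - W s) *m x) by nra.
rewrite ger0_norm ?subr_ge0 //; lra.
Qed.
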